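(* Assume $\epsilon\in[0,1/2)$ and the inlier stability condition. Then for every center $\hat\mu\in\mathbb R^p$ and every $w\in\Delta_{N,\epsilon}$, $$\Big\|\sum_{n=1}^Nw_ng_n-\mu_g\Big\|_2\le\delta_\mu+\alpha_\epsilon\sqrt{\gamma(w;\hat\mu)},\qquad \alpha_\epsilon=\sqrt{\frac{\epsilon}{1-2\epsilon}}.$$ In particular $\alpha_\epsilon<1$ whenever $\epsilon<1/3$.
   Context: Fix $N\ge1$, $p\ge1$, $\epsilon\in[0,1)$ and vectors $g_1,\dots,g_N\in\mathbb R^p$. For an index set $I$ and $\epsilon'\in[0,1)$, $\Delta_{I,\epsilon'}=\{w\in\mathbb R^{I}:\sum_{n\in I}w_n=1,\ 0\le w_n\le\frac1{(1-\epsilon')|I|}\}$, and $\Delta_{N,\epsilon}=\Delta_{[N],\epsilon}$. For $\hat\mu\in\mathbb R^p$, $S(w;\hat\mu)=\sum_n w_n(g_n-\hat\mu)(g_n-\hat\mu)^\top$ and $\gamma(w;\hat\mu)=\|S(w;\hat\mu)\|_{op}$ (largest eigenvalue). Inlier stability condition: there is a partition $[N]=I_{in}\sqcup I_{out}$ with $|I_{out}|\le\epsilon N$, a vector $\mu_g\in\mathbb R^p$, a symmetric PSD matrix $\Sigma_g$ and constants $\delta_\mu,\delta_\Sigma\ge0$ such that for every $w\in\Delta_{I_{in},\epsilon/(1-\epsilon)}$: $\|\sum_{n\in I_{in}}w_n(g_n-\mu_g)\|_2\le\delta_\mu$ and $\sum_{n\in I_{in}}w_n(g_n-\mu_g)(g_n-\mu_g)^\top\preceq\Sigma_g+\delta_\Sigma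 I_p$. *)

(* Defs.v *)
From HB Require Import structures.
From mathcomp Require Import all_boot all_order all_algebra.
From mathcomp Require Import classical_sets reals.
Set Implicit Arguments. Unset Strict Implicit. Unset Printing Implicit Defensive.
Import Order.TTheory GRing.Theory Num.Theory.
Local Open Scope ring_scope.

Definition norm2 {R : realType} {p : nat} (v : 'cV[R]_p) : R :=
  Num.sqrt (\sum_(i < p) v i 0 ^+ 2).

Definition qform {R : realType} {p : nat} (A : 'M[R]_p) (v : 'cV[R]_p) : R :=
  (v^T *m A *m v) 0 0.

Definition opnorm {R : realType} {p : nat} (A : 'M[R]_p) : R :=
  sup [set x : R | exists v : 'cV[R]_p, norm2 v = 1 /\ x = norm2 (A *m v)].

Definition loewner_le {R : realType} {p : nat} (A B : 'M[R]_p) : Prop :=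
  forall v : 'cV[R]_p, qform A v <= qform B v.
Definition psd {R : realType} {p : nat} (A : 'M[R]_p) : Prop :=
  A^T = A /\ forall v : 'cV[R]_p, 0 <= qform A v.

(* Delta_{I,eps'} : weights w on I (values outside I are irrelevant). *)
Definition in_Delta {R : realType} {N : nat} (I : {set 'I_N}) (eps : R)
  (w : 'I_N -> R) : Prop :=
  \sum_(n in I) w n = 1 /\
  forall n, n \in I -> 0 <= w n /\ w n <= 1 / ((1 - eps) * #|I|%:R).

Definition Smat {R : realType} {N p : nat} (g : 'I_N -> 'cV[R]_p)
  (w : 'I_N -> R) (muhat : 'cV[R]_p) : 'M[R]_p :=
  \sum_(n < N) w n *: ((g n - muhat) *m (g n - muhat)^T).

Definition gamma {R : realType} {N p : nat} (g : 'I_N -> 'cV[R]_p)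
  (w : 'I_N -> R) (muhat : 'cV[R]_p) : R := opnorm (Smat g w muhat).

Definition inlier_stable {R : realType} {N p : nat} (eps : R)
  (g : 'I_N -> 'cV[R]_p) (Iin : {set 'I_N}) (mu_g : 'cV[R]_p)
  (Sigma_g : 'M[R]_p) (delta_mu delta_Sigma : R) : Prop :=
  [/\ #|~: Iin|%:R <= eps * N%:R, psd Sigma_g, 0 <= delta_mu, 0 <= delta_Sigma &
   forall w : 'I_N -> R, in_Delta Iin (eps / (1 - eps)) w ->
     norm2 (\sum_(n in Iin) w n *: (g n - mu_g)) <= delta_mu /\
     loewner_le (\sum_(n in Iin) w n *: ((g n - mu_g) *m (g n - mu_g)^T))
                (Sigma_g + delta_Sigma%:M)].

Definition alpha {R : realType} (eps : R) : R := Num.sqrt (eps / (1 - 2 * eps)).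

(* Main.v *)
Require Import Defs.
From HB Require Import structures.
From mathcomp Require Import all_boot all_order all_algebra.
From mathcomp Require Import classical_sets reals.
From mathcomp Require Import ring lra.
Import Order.TTheory GRing.Theory Num.Theory.
Local Open Scope ring_scope.
Set Implicit Arguments. Unset Strict Implicit.


Lemma wcs (R : realType) (I : finType) (P : pred I) (w z : I -> R) :
  (forall i, P i -> 0 <= w i) ->
  (\sum_(i | P i) w i * z i) ^+ 2 <= (\sum_(i | P i) w i) * \sum_(i | P i) w i * z i ^+ 2.
Proof.
move=> w0.
set W := \sum_(i | P i) w i; set S := \sum_(i | P i) w i * z i;
set Q := \sum_(i | P i) w i * z i ^+ 2.
have W0 : 0 <= W by apply: sumr_ge0.
have [We|Wn0] := eqVneq W 0.
  have -> : S = 0.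
    rewrite /S big1 // => i Pi. by rewrite (psumr_eq0P w0 We Pi) mul0r.
  by rewrite We expr0n /= mul0r.
have Wp : 0 < W by rewrite lt0r Wn0.
set t := S / W.
have pos : 0 <= \sum_(i | P i) w i * (z i - t) ^+ 2.
  by apply: sumr_ge0 => i Pi; rewrite mulr_ge0 ?w0 ?sqr_ge0.
have E : \sum_(i | P i) w i * (z i - t) ^+ 2 = Q - (2 * t) * S + t ^+ 2 * W.
  transitivity (\sum_(i | P i) (w i * z i ^+ 2 - (2 * t) * (w i * z i) + t ^+ 2 * w i)).
    by apply: eq_bigr => i _; ring.
  by rewrite big_split /= sumrB -!mulr_sumr.
rewrite E /t in pos.
have : 0 <= W * (Q - 2 * (S / W) * S + (S / W) ^+ 2 * W) by rewrite mulr_ge0.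
have -> : W * (Q - 2 * (S / W) * S + (S / W) ^+ 2 * W) = W * Q - S ^+ 2.
  by field.
by rewrite subr_ge0.
Qed.


Definition dot (R : realType) {p : nat} (u x : 'cV[R]_p) : R := (u^T *m x) 0 0.

Lemma dotE (R : realType) p (u x : 'cV[R]_p) : dot u x = \sum_i u i 0 * x i 0.
Proof. by rewrite /dot !mxE; apply: eq_bigr => i _; rewrite mxE. Qed.

Lemma dotC (R : realType) p (u x : 'cV[R]_p) : dot u x = dot x u.
Proof. by rewrite !dotE; apply: eq_bigr => i _; rewrite mulrC. Qed.

Lemma dotB (R : realType) p (u x y : 'cV[R]_p) : dot u (x - y) = dot u x - dot u y.
Proof. by rewrite /dot mulmxBr !mxE. Qed.

Lemma dotBl (R : realType) p (u x y : 'cV[R]_p) : dot (x - y) u = dot x u - dot y u.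
Proof. by rewrite !(dotC _ u) dotB. Qed.

Lemma dotZ (R : realType) p (u x : 'cV[R]_p) c : dot u (c *: x) = c * dot u x.
Proof. by rewrite /dot -scalemxAr mxE. Qed.

Lemma dotZl (R : realType) p (u x : 'cV[R]_p) c : dot (c *: u) x = c * dot u x.
Proof. by rewrite dotC dotZ dotC. Qed.

Lemma dot_sum (R : realType) p (I : finType) (P : pred I) (u : 'cV[R]_p) F :
  dot u (\sum_(n | P n) F n) = \sum_(n | P n) dot u (F n).
Proof. by rewrite /dot mulmx_sumr summxE. Qed.

Lemma norm2E (R : realType) p (x : 'cV[R]_p) : norm2 x = Num.sqrt (dot x x).
Proof. by rewrite /norm2 dotE; congr Num.sqrt; apply: eq_bigr => i _; rewrite expr2. Qed.

Lemma dot_ge0 (R : realType) p (x : 'cV[R]_p) : 0 <= dot x x.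
Proof. by rewrite dotE; apply: sumr_ge0 => i _; rewrite -expr2 sqr_ge0. Qed.

Lemma norm2_sq (R : realType) p (x : 'cV[R]_p) : norm2 x ^+ 2 = dot x x.
Proof. by rewrite norm2E sqr_sqrtr ?dot_ge0. Qed.

Lemma qform_dot (R : realType) p (A : 'M[R]_p) v : qform A v = dot v (A *m v).
Proof. by rewrite /qform /dot -mulmxA. Qed.

Lemma qform_outer (R : realType) p (x v : 'cV[R]_p) : qform (x *m x^T) v = dot v x ^+ 2.
Proof.
rewrite qform_dot /dot -mulmxA mulmxA mxE big_ord1 expr2; congr (_ * _).
by rewrite -/(dot x v) dotC.
Qed.

Lemma qform_sum (R : realType) p (I : finType) (P : pred I) (w : I -> R) (M : I -> 'M[R]_p) v :
  qform (\sum_(n | P n) w n *: M n) v = \sum_(n | P n) w n * qform (M n) v.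
Proof.
rewrite qform_dot mulmx_suml dot_sum; apply: eq_bigr => n _.
by rewrite -scalemxAl dotZ qform_dot.
Qed.

Lemma dot_le_norm (R : realType) p (u x : 'cV[R]_p) : norm2 u = 1 -> dot u x <= norm2 x.
Proof.
move=> u1.
have uu : dot u u = 1 by rewrite -norm2_sq u1 expr1n.
set s := dot u x.
have h : 0 <= dot (x - s *: u) (x - s *: u) by apply: dot_ge0.
have : dot (x - s *: u) (x - s *: u) = dot x x - s ^+ 2.
  rewrite dotB dotZ !dotBl !dotZl uu (dotC x u) -/s; ring.
move=> E; rewrite E subr_ge0 in h.
rewrite norm2E (le_trans (ler_norm s)) //.
by rewrite -sqrtr_sqr ler_sqrt ?dot_ge0.
Qed.

Lemma norm2Z (R : realType) p (x : 'cV[R]_p) c : norm2 (c *: x) = `|c| * norm2 x.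
Proof.
rewrite !norm2E dotZ dotZl mulrA -expr2 sqrtrM ?sqr_ge0 //.
by rewrite sqrtr_sqr.
Qed.

Lemma opnorm_ge (R : realType) p (A : 'M[R]_p) v : norm2 v = 1 -> qform A v <= opnorm A.
Proof.
move=> v1; rewrite qform_dot (le_trans (dot_le_norm (A *m v) v1)) //.
rewrite /opnorm.
set E := (X in sup X).
have hub : has_ubound E.
  exists (Num.sqrt (\sum_i (\sum_j `|A i j|) ^+ 2)).
  move=> x [u [u1 ->]].
  rewrite /norm2 ler_sqrt; last first.
    by apply: sumr_ge0 => i _; rewrite sqr_ge0.
  apply: ler_sum => i _.
  have uj : forall j, `|u j 0| <= 1.
    move=> j; have : u j 0 ^+ 2 <= 1.
      have : \sum_i u i 0 ^+ 2 = 1.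
        rewrite -(@sqr_sqrtr _ (\sum_i u i 0 ^+ 2)) -/(norm2 u) ?u1 ?expr1n //.
        by apply: sumr_ge0 => k _; rewrite sqr_ge0.
      move=> <-; rewrite (bigD1 j) //= lerDl; apply: sumr_ge0 => k _.
      by rewrite sqr_ge0.
    rewrite -real_normK ?num_real // => h; have := normr_ge0 (u j 0); nra.
  rewrite -real_normK ?num_real // ler_pXn2r // ?nnegrE //; last first.
    by apply: sumr_ge0 => j _.
  rewrite mxE (le_trans (ler_norm_sum _ _ _)) // ler_sum // => j _.
  by rewrite normrM ler_piMr.
apply: (ub_le_sup hub); exists v; split=> //.
Qed.



Lemma eqle (R : realType) (x y : R) : x = y -> x <= y.
Proof. by move->. Qed.

Lemma split_sum (V : zmodType) N (I : {set 'I_N}) (F : 'I_N -> V) :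
  \sum_(n < N) F n = \sum_(n in I) F n + \sum_(n in ~: I) F n.
Proof.
rewrite (bigID (mem I)) /=; congr (_ + _); apply: eq_bigl => n; by rewrite !inE.
Qed.

Unset Implicit Arguments.
Set Strict Implicit.

Theorem mainTheorem9 (R : realType) (N p : nat) (eps : R)
  (g : 'I_N -> 'cV[R]_p) (Iin : {set 'I_N}) (mu_g : 'cV[R]_p)
  (Sigma_g : 'M[R]_p) (delta_mu delta_Sigma : R) :
  (1 <= N)%N -> (1 <= p)%N -> 0 <= eps -> eps < 1 / 2 ->
  inlier_stable eps g Iin mu_g Sigma_g delta_mu delta_Sigma ->
  (forall (muhat : 'cV[R]_p) (w : 'I_N -> R), in_Delta [set: 'I_N] eps w ->
     norm2 (\sum_(n < N) w n *: g n - mu_g)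
       <= delta_mu + alpha eps * Num.sqrt (gamma g w muhat))
  /\ (eps < 1 / 3 -> alpha eps < 1).
Proof.
move=> N1 p1 e0 eh [hO psdS dmu0 dS0 stab].
have e2 : 0 < 1 - 2 * eps by lra.
have e1 : 0 < 1 - eps by lra.
split; last first.
  move=> e3; rewrite /alpha -[X in _ < X]sqrtr1 ltr_sqrt //.
  by rewrite ltr_pdivrMr //; lra.
move=> muhat w [sw wb].
set Nr : R := N%:R in hO; pose K : R := #|Iin|%:R; set O : R := #|~: Iin|%:R in hO.
have KO : K + O = Nr by rewrite /K /O -natrD cardsC card_ord.
have Np : 0 < Nr by rewrite ltr0n.
have O_le : O <= eps * Nr := hO.
have K0 : 0 <= K by rewrite ler0n.
have wb' : forall n, 0 <= w n /\ w n * ((1 - eps) * Nr) <= 1.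
  move=> n; have [h1 h2] := wb n (finset.in_setT n); split=> //.
  move: h2; rewrite cardsT card_ord -/Nr ler_pdivlMr //.
  by rewrite mulr_gt0.
have sw' : \sum_(n < N) w n = 1.
  by rewrite -sw; apply: eq_bigl => n; rewrite !inE.
set Win := \sum_(n in Iin) w n; set Wout := \sum_(n in ~: Iin) w n.
have Wsum : Win + Wout = 1 by rewrite -sw' (split_sum Iin).
have Wout0 : 0 <= Wout by apply: sumr_ge0 => n _; case: (wb' n).
have Wout_le : Wout * ((1 - eps) * Nr) <= O.
  rewrite /Wout mulr_suml /O -sumr_const; apply: ler_sum => n _.
  by case: (wb' n).
have Wout_e : Wout * (1 - eps) <= eps.
  by rewrite -(ler_pM2r Np) -mulrA (le_trans Wout_le).
have Winp : 0 < Win by nra.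
set d := \sum_(n < N) w n *: g n - mu_g.
case: (lerP (norm2 d) delta_mu) => hd.
  apply: le_trans hd _; rewrite lerDl mulr_ge0 // ?sqrtr_ge0 //.
have nd : 0 < norm2 d by apply: le_lt_trans hd.
set v := (norm2 d)^-1 *: d.
have v1 : norm2 v = 1.
  by rewrite norm2Z ger0_norm ?invr_ge0 ?ltW // mulVf // gt_eqF.
have vd : dot v d = norm2 d.
  by rewrite dotZl -norm2_sq expr2 mulKf // gt_eqF.
set y := fun n => dot v (g n); set c := dot v muhat; set m := dot v mu_g.
set A := \sum_(n in Iin) w n * y n; set B := \sum_(n in ~: Iin) w n * y n.
have dd : norm2 d = A + B - m.
  rewrite -vd dotB dot_sum (split_sum Iin); congr (_ + _ - _).
    by apply: eq_bigr => n _; rewrite dotZ.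
  by apply: eq_bigr => n _; rewrite dotZ.
set Qin := \sum_(n in Iin) w n * (y n - c) ^+ 2.
set Qout := \sum_(n in ~: Iin) w n * (y n - c) ^+ 2.
have gam : Qin + Qout <= gamma g w muhat.
  apply: le_trans (opnorm_ge _ v1); rewrite qform_sum (split_sum Iin).
  by rewrite le_eqVlt; apply/orP; left; apply/eqP; congr (_ + _); apply: eq_bigr => n _; rewrite qform_outer dotB.
have CSin : (A - Win * c) ^+ 2 <= Win * Qin.
  have -> : A - Win * c = \sum_(n in Iin) w n * (y n - c).
    rewrite /A /Win mulr_suml -sumrB; apply: eq_bigr => n _; ring.
  by apply: wcs => n _; case: (wb' n).
have CSout : (B - Wout * c) ^+ 2 <= Wout * Qout.
  have -> : B - Wout * c = \sum_(n in ~: Iin) w n * (y n - c).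
    rewrite /B /Wout mulr_suml -sumrB; apply: eq_bigr => n _; ring.
  by apply: wcs => n _; case: (wb' n).
set w' := fun n => w n / Win.
have Dw' : in_Delta Iin (eps / (1 - eps)) w'.
  split.
    by rewrite /w' -mulr_suml divff // gt_eqF.
  move=> n nI; have [t0 t1] := wb' n.
  split; first by rewrite /w' divr_ge0 // ltW.
  have K0' : 0 < K.
    have : O < Nr by nra.
    lra.
  have -> : 1 / ((1 - eps / (1 - eps)) * K) = (1 - eps) / ((1 - 2 * eps) * K).
    field; rewrite ?gt_eqF //.
  rewrite /w' ler_pdivrMr // mulrAC ler_pdivlMr ?mulr_gt0 //.
  have h1 : w n * ((1 - 2 * eps) * K) * ((1 - eps) * Nr) <= (1 - 2 * eps) * K.
    have : 0 <= (1 - 2 * eps) * K by rewrite mulr_ge0 // ltW.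
    nra.
  have h2 : (1 - 2 * eps) * K <= (1 - eps) * Win * ((1 - eps) * Nr).
    have -> : Win = 1 - Wout by lra.
    have h3 : eps * K - eps * (1 - eps) * Nr >= 0.
      have : eps * (eps * Nr - O) >= 0 by rewrite mulr_ge0 // subr_ge0.
      nra.
    nra.
  rewrite -(ler_pM2r (_ : 0 < (1 - eps) * Nr)) ?mulr_gt0 //.
  exact: le_trans h2.
have [hmu _] := stab w' Dw'.
have hA : A - Win * m <= delta_mu * Win.
  rewrite -ler_pdivrMr //.
  apply: le_trans hmu; apply: le_trans (dot_le_norm _ v1).
  rewrite dot_sum /A /w' mulr_suml -sumrB mulr_suml; apply: eqle; apply: eq_bigr => n _.
  rewrite dotZ dotB -/(y n) -/m; by field; rewrite gt_eqF.
set D := norm2 d - delta_mu.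
have Dp : 0 < D by rewrite subr_gt0.
set u := B - Wout * c; set s := A - Win * c.
have key : Win * D <= Win * u - Wout * s.
  have -> : Win * u - Wout * s = Win * B - Wout * A by rewrite /u /s; ring.
  have -> : Wout = 1 - Win by lra.
  rewrite /D dd; nra.
have sq : (Win * u - Wout * s) ^+ 2 <= Win * Wout * (Qin + Qout).
  have -> : Win * Wout * (Qin + Qout) = Wout * (Win * Qin) + Win * (Wout * Qout) by ring.
  have h1 : Wout * s ^+ 2 <= Wout * (Win * Qin) by rewrite ler_wpM2l.
  have h2 : Win * u ^+ 2 <= Win * (Wout * Qout) by rewrite ler_wpM2l // ltW.
  have h3 : (Win * u - Wout * s) ^+ 2 <= Wout * s ^+ 2 + Win * u ^+ 2.
    have e : Wout * s ^+ 2 + Win * u ^+ 2 - (Win * u - Wout * s) ^+ 2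
      = Win * Wout * (u + s) ^+ 2.
      have -> : Wout = 1 - Win by lra.
      ring.
    by rewrite -subr_ge0 e; apply: mulr_ge0; [apply: mulr_ge0 => //; exact: ltW | exact: sqr_ge0].
  lra.
have fin1 : Win * D ^+ 2 <= Wout * gamma g w muhat.
  have h : (Win * D) ^+ 2 <= (Win * u - Wout * s) ^+ 2.
    rewrite ler_pXn2r // ?nnegrE ?mulr_ge0 ?ltW //.
    exact: lt_le_trans (mulr_gt0 Winp Dp) key.
  have h2 : Win * Wout * (Qin + Qout) <= Win * (Wout * gamma g w muhat).
    by rewrite -[Win * Wout * _]mulrA; apply: ler_wpM2l; [exact: ltW | apply: ler_wpM2l].
  have h3 : Win * (Win * D ^+ 2) <= Win * (Wout * gamma g w muhat).
    apply: le_trans h2; apply: le_trans sq; apply: le_trans h.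
    by rewrite exprMn expr2 mulrA.
  by rewrite ler_pM2l in h3.
have gam0 : 0 <= gamma g w muhat.
  apply: le_trans gam; rewrite addr_ge0 // sumr_ge0 // => n _;
    rewrite mulr_ge0 ?sqr_ge0 //; by case: (wb' n).
have fin2 : D ^+ 2 <= eps / (1 - 2 * eps) * gamma g w muhat.
  rewrite mulrAC ler_pdivlMr //.
  have h4 : Wout * (1 - 2 * eps) <= eps * Win.
    have -> : Win = 1 - Wout by lra.
    lra.
  rewrite -(ler_pM2l Winp).
  apply: (le_trans (y := Wout * gamma g w muhat * (1 - 2 * eps))).
    by rewrite mulrA ler_wpM2r // ltW.
  have : Wout * (1 - 2 * eps) * gamma g w muhat <= eps * Win * gamma g w muhat.
    by rewrite ler_wpM2r.
  have -> : Win * (eps * gamma g w muhat) = eps * Win * gamma g w muhat by ring.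
  by have -> : Wout * gamma g w muhat * (1 - 2 * eps) = Wout * (1 - 2 * eps) * gamma g w muhat by ring.
have : D <= alpha eps * Num.sqrt (gamma g w muhat).
  rewrite /alpha -sqrtrM; last by rewrite divr_ge0 // ltW.
  rewrite -(ger0_norm (ltW Dp)) -sqrtr_sqr ler_sqrt //.
  by rewrite mulr_ge0 // divr_ge0 // ltW.
rewrite /D; lra.
Qed.
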